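(* $\mathrm{A}_2(4,3)=5$, and there are exactly $3$ isomorphism classes of sets of $5$ subspaces of $\mathbb{F}_2^4$ with pairwise subspace distance $\geq3$. Taking a line spread $\{L_1,\dots,L_5\}$ of $\mathrm{PG}(3,\mathbb{F}_2)$ (five pairwise trivially-intersecting $2$-dimensional subspaces of $\mathbb{F}_2^4$), representatives are: (a) $\{L_1,L_2,L_3,L_4,L_5\}$; (b) $\{L_1,L_2,L_3,L_4,P\}$ with $P$ a $1$-dimensional subspace of $L_5$; (c) $\{L_1,L_2,L_3,P,E\}$ with $P$ a $1$-dimensional subspace of $L_4$ and $E$ a $3$-dimensional subspace containing $L_5$ with $P\not\subseteq E$.
   Context: Subspace distance $\mathrm{d}_{\mathrm{S}}(X,Y)=\dim(X+Y)-\dim(X\cap Y)$. Two such codes are isomorphic if some bijection of the set of subspaces of $\mathbb{F}_2^4$ preserving $\mathrm{d}_{\mathrm{S}}$ (equivalently, an element of $\mathrm{GL}(4,\mathbb{F}_2)$, possibly composed with $X\mapsto X^\perp$) maps one onto the other. *)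

(* Defs.v *)
From HB Require Import structures.
From mathcomp Require Import all_boot all_order all_algebra all_fingroup all_field.
Set Implicit Arguments. Unset Strict Implicit. Unset Printing Implicit Defensive.
Import GRing.Theory.

Definition V4 := 'rV['F_2]_4.
Definition subsp := {vspace V4}.

Definition dS (X Y : subsp) : nat := (\dim (X + Y) - \dim (X :&: Y))%N.

Definition is_code (d : nat) (C : seq subsp) : Prop :=
  uniq C /\ forall X Y, X \in C -> Y \in C -> X != Y -> (d <= dS X Y)%N.

Definition code_iso (C C' : seq subsp) : Prop :=
  exists f : subsp -> subsp,
    [/\ bijective f, (forall X Y, dS (f X) (f Y) = dS X Y) & map f C =i C'].

Definition line_spread (L : 'I_5 -> subsp) : Prop :=
  (forall i, \dim (L i) = 2%N) /\ (forall i j, i != j -> (L i :&: L j = 0)%VS).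

Definition i0 : 'I_5 := @Ordinal 5 0 isT.
Definition i1 : 'I_5 := @Ordinal 5 1 isT.
Definition i2 : 'I_5 := @Ordinal 5 2 isT.
Definition i3 : 'I_5 := @Ordinal 5 3 isT.
Definition i4 : 'I_5 := @Ordinal 5 4 isT.

(* hypotheses on the auxiliary subspaces:
   P5 a point of L5, P4 a point of L4, E a plane containing L5 with P4 not in E *)
Definition spread_data (L : 'I_5 -> subsp) (P5 P4 E : subsp) : Prop :=
  [/\ line_spread L,
      \dim P5 = 1%N /\ (P5 <= L i4)%VS,
      \dim P4 = 1%N /\ (P4 <= L i3)%VS &
      [/\ \dim E = 3%N, (L i4 <= E)%VS & ~~ (P4 <= E)%VS]].

Definition code_a (L : 'I_5 -> subsp) : seq subsp := [:: L i0; L i1; L i2; L i3; L i4].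
Definition code_b (L : 'I_5 -> subsp) (P5 : subsp) : seq subsp :=
  [:: L i0; L i1; L i2; L i3; P5].
Definition code_c (L : 'I_5 -> subsp) (P4 E : subsp) : seq subsp :=
  [:: L i0; L i1; L i2; P4; E].

(* Main.v *)
Require Import Defs.
From HB Require Import structures.
From mathcomp Require Import all_boot all_order all_algebra all_fingroup all_field.
Set Implicit Arguments. Unset Strict Implicit. Unset Printing Implicit Defensive.
From mathcomp Require Import zify.
Import GRing.Theory.

Definition bt (n j : nat) : bool := odd (n %/ 2 ^ j).
Definition XT : seq (seq nat) := [:: [:: 0; 1; 2; 3; 4; 5; 6; 7; 8; 9; 10; 11; 12; 13; 14; 15];
  [:: 1; 0; 3; 2; 5; 4; 7; 6; 9; 8; 11; 10; 13; 12; 15; 14];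
  [:: 2; 3; 0; 1; 6; 7; 4; 5; 10; 11; 8; 9; 14; 15; 12; 13];
  [:: 3; 2; 1; 0; 7; 6; 5; 4; 11; 10; 9; 8; 15; 14; 13; 12];
  [:: 4; 5; 6; 7; 0; 1; 2; 3; 12; 13; 14; 15; 8; 9; 10; 11];
  [:: 5; 4; 7; 6; 1; 0; 3; 2; 13; 12; 15; 14; 9; 8; 11; 10];
  [:: 6; 7; 4; 5; 2; 3; 0; 1; 14; 15; 12; 13; 10; 11; 8; 9];
  [:: 7; 6; 5; 4; 3; 2; 1; 0; 15; 14; 13; 12; 11; 10; 9; 8];
  [:: 8; 9; 10; 11; 12; 13; 14; 15; 0; 1; 2; 3; 4; 5; 6; 7];
  [:: 9; 8; 11; 10; 13; 12; 15; 14; 1; 0; 3; 2; 5; 4; 7; 6];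
  [:: 10; 11; 8; 9; 14; 15; 12; 13; 2; 3; 0; 1; 6; 7; 4; 5];
  [:: 11; 10; 9; 8; 15; 14; 13; 12; 3; 2; 1; 0; 7; 6; 5; 4];
  [:: 12; 13; 14; 15; 8; 9; 10; 11; 4; 5; 6; 7; 0; 1; 2; 3];
  [:: 13; 12; 15; 14; 9; 8; 11; 10; 5; 4; 7; 6; 1; 0; 3; 2];
  [:: 14; 15; 12; 13; 10; 11; 8; 9; 6; 7; 4; 5; 2; 3; 0; 1];
  [:: 15; 14; 13; 12; 11; 10; 9; 8; 7; 6; 5; 4; 3; 2; 1; 0]].
Definition xr n m := nth 0 (nth [::] XT n) m.
Definition nb (s : seq bool) n := nth false s n.
Fixpoint allb {T : Type} (p : T -> bool) (s : seq T) :=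
  if s is x :: s' then (if p x then allb p s' else false) else true.
Lemma allbE {T : Type} (p : T -> bool) s : allb p s = all p s.
Proof. by elim: s => //= x s ->; case: (p x). Qed.
Definition closedb s := if size s == 16 then (if nb s 0 then
  allb (fun n => if nb s n then allb (fun m => if nb s m then nb s (xr n m) else true)
     (iota 0 16) else true) (iota 0 16) else false) else false.
Fixpoint allbl (k : nat) : seq (seq bool) :=
  if k is k'.+1 then [seq b :: s | b <- [:: false; true], s <- allbl k'] else [:: [::]].
Definition capc (s t : seq bool) := [seq p.1 && p.2 | p <- zip s t].
Definition lg n := match n with 2 => 1 | 4 => 2 | 8 => 3 | 16 => 4 | _ => 0 end%N.
Definition dimc s := lg (count id s).
Definition dSc s t := (dimc s + dimc t - dimc (capc s t) - dimc (capc s t))%N.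
Definition SL : seq (seq bool) := [::
  [:: true; false; false; false; false; false; false; false; false; false; false; false; false; false; false; false];
  [:: true; false; false; false; false; false; false; false; false; false; false; false; false; false; false; true];
  [:: true; false; false; false; false; false; false; false; false; false; false; false; false; false; true; false];
  [:: true; false; false; false; false; false; false; false; false; false; false; false; false; true; false; false];
  [:: true; false; false; false; false; false; false; false; false; false; false; false; true; false; false; false];
  [:: true; false; false; false; false; false; false; false; false; false; false; true; false; false; false; false];
  [:: true; false; false; false; false; false; false; false; false; false; true; false; false; false; false; false];
  [:: true; false; false; false; false; false; false; false; false; true; false; false; false; false; false; false];
  [:: true; false; false; false; false; false; false; false; true; false; false; false; false; false; false; false];
  [:: true; false; false; false; false; false; false; true; false; false; false; false; false; false; false; false];
  [:: true; false; false; false; false; false; false; true; false; false; false; true; true; false; false; false];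
  [:: true; false; false; false; false; false; false; true; false; false; true; false; false; true; false; false];
  [:: true; false; false; false; false; false; false; true; false; true; false; false; false; false; true; false];
  [:: true; false; false; false; false; false; false; true; true; false; false; false; false; false; false; true];
  [:: true; false; false; false; false; false; true; false; false; false; false; false; false; false; false; false];
  [:: true; false; false; false; false; false; true; false; false; false; false; true; false; true; false; false];
  [:: true; false; false; false; false; false; true; false; false; false; true; false; true; false; false; false];
  [:: true; false; false; false; false; false; true; false; false; true; false; false; false; false; false; true];
  [:: true; false; false; false; false; false; true; false; true; false; false; false; false; false; true; false];
  [:: true; false; false; false; false; true; false; false; false; false; false; false; false; false; false; false];
  [:: true; false; false; false; false; true; false; false; false; false; false; true; false; false; true; false];
  [:: true; false; false; false; false; true; false; false; false; false; true; false; false; false; false; true];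
  [:: true; false; false; false; false; true; false; false; false; true; false; false; true; false; false; false];
  [:: true; false; false; false; false; true; false; false; true; false; false; false; false; true; false; false];
  [:: true; false; false; false; true; false; false; false; false; false; false; false; false; false; false; false];
  [:: true; false; false; false; true; false; false; false; false; false; false; true; false; false; false; true];
  [:: true; false; false; false; true; false; false; false; false; false; true; false; false; false; true; false];
  [:: true; false; false; false; true; false; false; false; false; true; false; false; false; true; false; false];
  [:: true; false; false; false; true; false; false; false; true; false; false; false; true; false; false; false];
  [:: true; false; false; true; false; false; false; false; false; false; false; false; false; false; false; false];
  [:: true; false; false; true; false; false; false; false; false; false; false; false; false; true; true; false];
  [:: true; false; false; true; false; false; false; false; false; false; false; false; true; false; false; true];
  [:: true; false; false; true; false; false; false; false; false; true; true; false; false; false; false; false];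
  [:: true; false; false; true; false; false; false; false; true; false; false; true; false; false; false; false];
  [:: true; false; false; true; false; true; true; false; false; false; false; false; false; false; false; false];
  [:: true; false; false; true; false; true; true; false; false; true; true; false; true; false; false; true];
  [:: true; false; false; true; false; true; true; false; true; false; false; true; false; true; true; false];
  [:: true; false; false; true; true; false; false; true; false; false; false; false; false; false; false; false];
  [:: true; false; false; true; true; false; false; true; false; true; true; false; false; true; true; false];
  [:: true; false; false; true; true; false; false; true; true; false; false; true; true; false; false; true];
  [:: true; false; true; false; false; false; false; false; false; false; false; false; false; false; false; false];
  [:: true; false; true; false; false; false; false; false; false; false; false; false; false; true; false; true];
  [:: true; false; true; false; false; false; false; false; false; false; false; false; true; false; true; false];
  [:: true; false; true; false; false; false; false; false; false; true; false; true; false; false; false; false];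
  [:: true; false; true; false; false; false; false; false; true; false; true; false; false; false; false; false];
  [:: true; false; true; false; false; true; false; true; false; false; false; false; false; false; false; false];
  [:: true; false; true; false; false; true; false; true; false; true; false; true; true; false; true; false];
  [:: true; false; true; false; false; true; false; true; true; false; true; false; false; true; false; true];
  [:: true; false; true; false; true; false; true; false; false; false; false; false; false; false; false; false];
  [:: true; false; true; false; true; false; true; false; false; true; false; true; false; true; false; true];
  [:: true; false; true; false; true; false; true; false; true; false; true; false; true; false; true; false];
  [:: true; true; false; false; false; false; false; false; false; false; false; false; false; false; false; false];
  [:: true; true; false; false; false; false; false; false; false; false; false; false; false; false; true; true];
  [:: true; true; false; false; false; false; false; false; false; false; false; false; true; true; false; false];
  [:: true; true; false; false; false; false; false; false; false; false; true; true; false; false; false; false];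
  [:: true; true; false; false; false; false; false; false; true; true; false; false; false; false; false; false];
  [:: true; true; false; false; false; false; true; true; false; false; false; false; false; false; false; false];
  [:: true; true; false; false; false; false; true; true; false; false; true; true; true; true; false; false];
  [:: true; true; false; false; false; false; true; true; true; true; false; false; false; false; true; true];
  [:: true; true; false; false; true; true; false; false; false; false; false; false; false; false; false; false];
  [:: true; true; false; false; true; true; false; false; false; false; true; true; false; false; true; true];
  [:: true; true; false; false; true; true; false; false; true; true; false; false; true; true; false; false];
  [:: true; true; true; true; false; false; false; false; false; false; false; false; false; false; false; false];
  [:: true; true; true; true; false; false; false; false; false; false; false; false; true; true; true; true];
  [:: true; true; true; true; false; false; false; false; true; true; true; true; false; false; false; false];
  [:: true; true; true; true; true; true; true; true; false; false; false; false; false; false; false; false];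
  [:: true; true; true; true; true; true; true; true; true; true; true; true; true; true; true; true]].

Lemma iotaP n k : n < k -> n \in iota 0 k.
Proof. by rewrite mem_iota. Qed.

Lemma allb_iota (p : nat -> bool) k : allb p (iota 0 k) -> forall n, n < k -> p n.
Proof. by rewrite allbE => /allP H n /iotaP /H. Qed.

Lemma allb_iotaI (p : nat -> bool) k : (forall n, n < k -> p n) -> allb p (iota 0 k).
Proof. by move=> H; rewrite allbE; apply/allP => n; rewrite mem_iota => /andP [_ /H]. Qed.

Lemma bt_xr n m j : n < 16 -> m < 16 -> j < 4 -> bt (xr n m) j = bt n j (+) bt m j.
Proof.
have H : allb (fun n => allb (fun m => allb (fun j => bt (xr n m) j == bt n j (+) bt m j)
   (iota 0 4)) (iota 0 16)) (iota 0 16) by vm_compute.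
move=> hn hm hj; apply/eqP.
exact: (allb_iota (allb_iota (allb_iota H hn) hm) hj).
Qed.

Lemma xr_lt n m : n < 16 -> m < 16 -> xr n m < 16.
Proof.
have H : allb (fun n => allb (fun m => xr n m < 16) (iota 0 16)) (iota 0 16) by vm_compute.
move=> hn hm; exact: (allb_iota (allb_iota H hn) hm).
Qed.

Lemma bt_inj n m : n < 16 -> m < 16 ->
  (forall j, j < 4 -> bt n j = bt m j) -> n = m.
Proof.
have H : allb (fun n => allb (fun m =>
   if [&& bt n 0 == bt m 0, bt n 1 == bt m 1, bt n 2 == bt m 2 & bt n 3 == bt m 3]
   then n == m else true) (iota 0 16)) (iota 0 16) by vm_compute.
move=> hn hm hj; have := allb_iota (allb_iota H hn) hm.
by rewrite !hj // !eqxx /= => /eqP.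
Qed.

Local Open Scope ring_scope.

Definition vecn (n : nat) : V4 := \row_(j < 4) ((bt n j)%:R : 'F_2).

Lemma natr_addb (a b : bool) : ((a (+) b)%:R : 'F_2) = a%:R + b%:R.
Proof. by case: a; case: b; rewrite ?addr0 ?add0r //=; apply/eqP. Qed.

Lemma natr_b_inj (a b : bool) : (a%:R : 'F_2) = b%:R -> a = b.
Proof. by case: a; case: b => // /eqP. Qed.

Lemma vecn_xr n m : (n < 16)%N -> (m < 16)%N -> vecn (xr n m) = vecn n + vecn m.
Proof. by move=> hn hm; apply/rowP => j; rewrite !mxE bt_xr // natr_addb. Qed.

Lemma vecn0 : vecn 0 = 0.
Proof. by apply/rowP => j; rewrite !mxE /bt div0n. Qed.

Lemma vecn_inj n m : (n < 16)%N -> (m < 16)%N -> vecn n = vecn m -> n = m.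
Proof.
move=> hn hm E; apply: bt_inj => // j hj.
have := congr1 (fun v : V4 => v 0 (Ordinal hj)) E; rewrite !mxE /=.
exact: natr_b_inj.
Qed.

Lemma vecn_surj (v : V4) : exists2 n, (n < 16)%N & vecn n = v.
Proof.
pose f := fun i : 'I_16 => vecn i.
have fi : injective f by move=> i j /vecn_inj => /(_ (ltn_ord i) (ltn_ord j)) /val_inj.
have cV : #|{: V4}| = 16%N by rewrite /V4 card_mx card_Fp.
have [|g _ fg] := inj_card_bij fi; first by rewrite cV card_ord.
by exists (g v) => //; rewrite -[RHS]fg.
Qed.

Definition msk (X : subsp) : seq bool := mkseq (fun n => vecn n \in X) 16.
Definition unmsk (s : seq bool) : subsp :=
  <<[seq vecn n | n <- iota 0 16 & nb s n]>>%VS.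

Lemma size_msk X : size (msk X) = 16%N.
Proof. by rewrite size_mkseq. Qed.

Lemma nb_msk X n : (n < 16)%N -> nb (msk X) n = (vecn n \in X).
Proof. by move=> h; rewrite /nb nth_mkseq. Qed.

Lemma closedbP s : closedb s ->
  [/\ size s = 16%N, nb s 0 & forall n m, (n < 16)%N -> (m < 16)%N -> nb s n -> nb s m -> nb s (xr n m)].
Proof.
rewrite /closedb; case: eqP => // hs; case: ifP => // h0 H; split => // n m hn hm hsn hsm.
have := allb_iota H hn; rewrite hsn => /allb_iota /(_ m hm); by rewrite hsm.
Qed.

Lemma closedbI s : size s = 16%N -> nb s 0 ->
  (forall n m, (n < 16)%N -> (m < 16)%N -> nb s n -> nb s m -> nb s (xr n m)) -> closedb s.
Proof.
move=> hs h0 H; rewrite /closedb hs eqxx h0; apply: allb_iotaI => n hn.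
case: ifP => // hsn; apply: allb_iotaI => m hm.
by case: ifP => // hsm; apply: H.
Qed.

Lemma msk_closed X : closedb (msk X).
Proof.
apply: closedbI; first exact: size_msk.
  by rewrite nb_msk // vecn0 mem0v.
move=> n m hn hm; rewrite !nb_msk ?xr_lt // vecn_xr //; exact: memvD.
Qed.

Lemma F2_cases (c : 'F_2) : c = 0 \/ c = 1.
Proof. case: c => [[|[|n]]] i; [left|right|done]; exact/val_inj. Qed.

Lemma mem_unmsk s n : closedb s -> (n < 16)%N -> (vecn n \in unmsk s) = nb s n.
Proof.
move=> /closedbP [hs h0 hcl] hn; apply/idP/idP; last first.
  by move=> h; apply: memv_span; apply: map_f; rewrite mem_filter h mem_iota.
rewrite /unmsk; set S := [seq _ | _ <- _ & _] => hv.
have E := @coord_span _ _ _ (in_tuple S) _ hv.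
pose Tp := fun v : V4 => has (fun k => (k < 16)%N && nb s k && (vecn k == v)) (iota 0 16).
suff : Tp (vecn n).
  case/hasP => k _ /andP [/andP [hk hsk] /eqP e].
  by rewrite -(vecn_inj hk hn e).
rewrite {1}E; apply: (big_ind Tp).
- by apply/hasP; exists 0%N => //; rewrite h0 vecn0 eqxx.
- move=> x y /hasP [k _ /andP [/andP [hk hsk] /eqP <-]] /hasP [l _ /andP [/andP [hl hsl] /eqP <-]].
  apply/hasP; exists (xr k l); first by rewrite mem_iota xr_lt.
  by rewrite xr_lt // hcl // vecn_xr // eqxx.
- move=> i _; case: (F2_cases (coord (in_tuple S) i (vecn n))) => ->.
    by rewrite scale0r; apply/hasP; exists 0%N => //; rewrite h0 vecn0 eqxx.
  rewrite scale1r; have : (in_tuple S)`_i \in S by apply: mem_nth; exact: ltn_ord.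
  case/mapP => k; rewrite mem_filter mem_iota /= => /andP [hsk hk] ->.
  by apply/hasP; exists k; rewrite ?mem_iota // hk hsk eqxx.
Qed.

Lemma unmsk_msk X : unmsk (msk X) = X.
Proof.
apply/eqP; rewrite eqEsubv; apply/andP; split.
  apply/span_subvP => v /mapP [k]; rewrite mem_filter mem_iota /= => /andP [hk hk'] ->.
  by rewrite -nb_msk.
apply/subvP => v vX; have [n hn ev] := vecn_surj v; rewrite -ev in vX *.
by apply: memv_span; apply: map_f; rewrite mem_filter mem_iota /= nb_msk // vX hn.
Qed.

Lemma msk_unmsk s : closedb s -> msk (unmsk s) = s.
Proof.
move=> hc; have [hs _ _] := closedbP hc.
apply: (@eq_from_nth _ false); first by rewrite size_msk hs.
move=> i; rewrite size_msk => hi; rewrite -/(nb _ i) nb_msk // mem_unmsk //.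
Qed.

Lemma msk_inj : injective msk.
Proof. by move=> X Y E; rewrite -(unmsk_msk X) E unmsk_msk. Qed.

Lemma card_msk X : count id (msk X) = (2 ^ \dim X)%N.
Proof.
rewrite /msk /mkseq count_map -val_enum_ord count_map.
have -> : count (preim val (preim (fun n => vecn n \in X) id)) (enum 'I_16)
     = #|[pred i : 'I_16 | vecn i \in X]|.
  by rewrite cardE -size_filter /enum_mem filter_predT.
pose f := fun i : 'I_16 => vecn i.
have fi : injective f by move=> i j /vecn_inj => /(_ (ltn_ord i) (ltn_ord j)) /val_inj.
have -> : #|[pred i : 'I_16 | vecn i \in X]| = #|[preim f of mem X]| by apply: eq_card.
have -> : (2 ^ \dim X)%N = #|X| by rewrite card_vspace card_Fp.
rewrite card_preim //; apply: eq_card => v /=.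
rewrite !inE; case: (v \in X); rewrite ?andbF ?andbT //.
have [n hn <-] := vecn_surj v; exact: (codom_f f (Ordinal hn)).
Qed.

Lemma lg_exp d : (d <= 4)%N -> lg (2 ^ d) = d.
Proof. by case: d => [|[|[|[|[|]]]]]. Qed.

Lemma dim_le4 (X : subsp) : (\dim X <= 4)%N.
Proof.
have : (count id (msk X) <= 16)%N by rewrite -(size_msk X) count_size.
by rewrite card_msk -[16%N]/(2 ^ 4)%N leq_exp2l.
Qed.

Lemma dim_msk (X : subsp) : \dim X = dimc (msk X).
Proof. by rewrite /dimc card_msk lg_exp // dim_le4. Qed.

Lemma msk_cap X Y : msk (X :&: Y)%VS = capc (msk X) (msk Y).
Proof.
apply: (@eq_from_nth _ false); first by rewrite size_msk size_map size_zip !size_msk.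
move=> i; rewrite size_msk => hi; rewrite -/(nb _ i) nb_msk // memv_cap.
rewrite /capc (nth_map (false, false)); last by rewrite size_zip !size_msk.
by rewrite nth_zip ?size_msk //= -!/(nb _ i) !nb_msk.
Qed.

Lemma dS_formula X Y : dS X Y = (\dim X + \dim Y - \dim (X :&: Y) - \dim (X :&: Y))%N.
Proof. by rewrite /dS -(dimv_sum_cap X Y) addnK. Qed.

Lemma dS_msk X Y : dS X Y = dSc (msk X) (msk Y).
Proof. by rewrite dS_formula /dSc -msk_cap -!dim_msk. Qed.

Lemma dS_unmsk s t : closedb s -> closedb t -> dS (unmsk s) (unmsk t) = dSc s t.
Proof. by move=> hs ht; rewrite dS_msk !msk_unmsk. Qed.

Lemma dim_unmsk s : closedb s -> \dim (unmsk s) = dimc s.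
Proof. by move=> hs; rewrite dim_msk msk_unmsk. Qed.

Definition subc s t := all (fun n => nb s n ==> nb t n) (iota 0 16).

Lemma sub_unmsk s t : closedb s -> closedb t -> (unmsk s <= unmsk t)%VS = subc s t.
Proof.
move=> hs ht; apply/idP/idP.
  move/subvP => H; apply/allP => n; rewrite mem_iota /= => hn.
  by apply/implyP; rewrite -!mem_unmsk // => /H.
move=> /allP H; apply/span_subvP => v /mapP [k]; rewrite mem_filter mem_iota /= => /andP [hk hk'] ->.
by rewrite mem_unmsk //; have := H k; rewrite mem_iota hk' => /(_ isT) /implyP; apply.
Qed.

Local Open Scope nat_scope.
Definition tv j k n := if bt n j then xr n (2 ^ k) else n.
Definition gT j k (s : seq bool) := mkseq (fun n => nb s (tv j k n)) 16.
Definition dotp n m := (bt n 0 && bt m 0) (+) (bt n 1 && bt m 1) (+) (bt n 2 && bt m 2) (+) (bt n 3 && bt m 3).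
Definition gP (s : seq bool) := mkseq (fun n => allb (fun m => if nb s m then ~~ dotp n m else true) (iota 0 16)) 16.
Definition gens : seq (seq bool -> seq bool) :=
  gP :: [seq gT jk.1 jk.2 | jk <- [:: (0,1);(0,2);(0,3);(1,0);(1,2);(1,3);(2,0);(2,1);(2,3);(3,0);(3,1);(3,2)]].
Definition gok (G : seq bool -> seq bool) := let Z := [seq (s, G s) | s <- SL] in
  if allb (fun p => p.2 \in SL) Z then (if allb (fun p => G p.2 == p.1) Z then
      allb (fun p => allb (fun q => dSc p.2 q.2 == dSc p.1 q.1) Z) Z else false) else false.
Definition tab (G : seq bool -> seq bool) := map (fun s => index (G s) SL) SL.
Fixpoint lexle (s t : seq nat) := match s, t with
  | [::], _ => true | _ :: _, [::] => false
  | x :: s', y :: t' => if x < y then true else if x == y then lexle s' t' else false end.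
Fixpoint dd (s : seq (seq nat)) := match s with
  | x :: ((y :: _) as t) => if x == y then dd t else x :: dd t
  | _ => s end.
Definition app (t : seq nat) K := sort leq (map (nth 0 t) K).
Fixpoint dropl x (o : seq (seq nat)) := if o is y :: o' then (if lexle x y then o else dropl x o') else o.
Fixpoint sdiff (s o : seq (seq nat)) := if s is x :: s' then
   (let o' := dropl x o in if head [::] o' == x then sdiff s' o' else x :: sdiff s' o') else [::].
Definition step (T : seq (seq nat)) (OF : seq (seq nat) * seq (seq nat)) :=
  let F' := sdiff (dd (sort lexle (flatten [seq map (app t) OF.2 | t <- T]))) OF.1 in
  (merge lexle OF.1 F', F').
Definition orb T (K0 : seq nat) := (iter 8 (step T) ([:: K0], [:: K0])).1.
Definition mkok := [seq [seq 3 <= dSc s t | t <- SL] | s <- SL].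
Definition okp (ok : seq (seq bool)) a b := nth false (nth [::] ok a) b.
Definition nxt (K : seq nat) := if K is _ :: _ then (last 0 K).+1 else 0.
Definition ext ok K := [seq rcons K x | x <- iota (nxt K) (67 - nxt K) & allb (fun k => okp ok k x) K].
Definition cliques ok n := iter n (fun L => flatten (map (ext ok) L)) [:: [::]].
Definition Sa := [:: 10; 17; 23; 26; 62].
Definition Sb := [:: 1; 10; 18; 27; 62].
Definition Sc := [:: 1; 10; 18; 27; 64].

Lemma c_SL : (size SL == 67) && uniq SL && allb closedb SL.
Proof. by vm_compute. Qed.
Lemma c_compl : allb (fun s => if closedb s then s \in SL else true) (allbl 16).
Proof. by vm_compute. Qed.
Lemma c_gens : allb gok gens.
Proof. by vm_compute. Qed.
Lemma c_cl6 : cliques mkok 6 = [::].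
Proof. by vm_compute. Qed.
Lemma c_cl5 : cliques mkok 5 =
  dd (sort lexle (orb (map tab gens) Sa ++ orb (map tab gens) Sb ++ orb (map tab gens) Sc)).
Proof. apply/eqP; by vm_compute. Qed.

Lemma SL_size : size SL = 67.
Proof. by case/andP: c_SL => /andP [/eqP]. Qed.
Lemma SL_uniq : uniq SL.
Proof. by case/andP: c_SL => /andP []. Qed.
Lemma SL_closedm s : s \in SL -> closedb s.
Proof. by case/andP: c_SL => _; rewrite allbE => /allP; apply. Qed.
Lemma SL_closed k : k < 67 -> closedb (nth [::] SL k).
Proof. by move=> hk; apply: SL_closedm; apply: mem_nth; rewrite SL_size. Qed.

Lemma mem_allbl s : s \in allbl (size s).
Proof.
elim: s => [|b s IH] //.
change (b :: s \in [seq b :: s | b <- [:: false; true], s <- allbl (size s)]).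
apply/allpairsP; exists (b, s) => //=; by case: b.
Qed.

Lemma closed_SL s : closedb s -> s \in SL.
Proof.
move=> hc; have [hs _ _] := closedbP hc.
have := c_compl; rewrite allbE => /allP /(_ s); rewrite -hs mem_allbl hc; apply => //.
Qed.

Lemma msk_in_SL X : msk X \in SL.
Proof. exact/closed_SL/msk_closed. Qed.

Definition idx (X : subsp) := index (msk X) SL.
Lemma idx_lt X : idx X < 67.
Proof. by rewrite -SL_size index_mem msk_in_SL. Qed.
Lemma nth_idx X : nth [::] SL (idx X) = msk X.
Proof. by rewrite nth_index // msk_in_SL. Qed.

Definition absc (K : seq nat) : seq subsp := map (fun k => unmsk (nth [::] SL k)) K.

Lemma eqi_map (f : subsp -> subsp) (A B : seq subsp) : A =i B -> map f A =i map f B.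
Proof.
move=> E y; apply/mapP/mapP => [] [x hx ->]; exists x => //; by rewrite ?E // -E.
Qed.

Lemma iso_refl C : code_iso C C.
Proof. by exists id; split => //; [exists id | move=> x; rewrite map_id]. Qed.

Lemma iso_trans C D E : code_iso C D -> code_iso D E -> code_iso C E.
Proof.
move=> [f [bf df mf]] [h [bh dh mh]]; exists (h \o f); split.
- exact: bij_comp.
- by move=> X Y /=; rewrite dh df.
- by move=> x; rewrite map_comp -mh; apply: eqi_map.
Qed.

Lemma iso_sym C D : code_iso C D -> code_iso D C.
Proof.
move=> [f [[g fg gf] df mf]]; exists g; split.
- by exists f.
- by move=> X Y; rewrite -df !gf.
- move=> x; apply/mapP/idP => [[y]|hx].
    by rewrite -mf => /mapP [z hz ->] ->; rewrite fg.
  by exists (f x); rewrite ?fg // -mf map_f.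
Qed.

Lemma iso_eqi_l C C' D : C =i C' -> code_iso C' D -> code_iso C D.
Proof.
move=> E [f [bf df mf]]; exists f; split => // x; rewrite -mf; exact: eqi_map.
Qed.

Lemma iso_invol (f : subsp -> subsp) D : (forall X, f (f X) = X) ->
  (forall X Y, dS (f X) (f Y) = dS X Y) -> code_iso (map f D) D.
Proof.
move=> ff df; exists f; split => //; first by exists f.
by move=> x; rewrite -map_comp (@eq_map _ _ _ id) ?map_id.
Qed.

Lemma allbE_pf {T : eqType} (p : T -> bool) s : allb p s -> forall x, x \in s -> p x.
Proof. by rewrite allbE => /allP. Qed.

Lemma gokP G : gok G ->
  [/\ forall s, s \in SL -> G s \in SL, forall s, s \in SL -> G (G s) = s &
      forall s t, s \in SL -> t \in SL -> dSc (G s) (G t) = dSc s t].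
Proof.
rewrite /gok; set Z := map _ SL.
have mZ s : s \in SL -> (s, G s) \in Z by move=> hs; apply: (map_f (fun s => (s, G s))).
case: ifP => // /allbE_pf H1; case: ifP => // /allbE_pf H2 /allbE_pf H3.
split.
- by move=> s /mZ /H1.
- by move=> s /mZ /H2 /eqP.
- move=> s t /mZ hs /mZ ht; have := H3 _ hs; rewrite allbE => /allP /(_ _ ht) /eqP //.
Qed.

Definition fG (G : seq bool -> seq bool) (X : subsp) : subsp := unmsk (G (msk X)).

Lemma fG_props (G : seq bool -> seq bool) : gok G ->
  (forall X, fG G (fG G X) = X) /\ (forall X Y, dS (fG G X) (fG G Y) = dS X Y).
Proof.
move=> hG; have [g1 g2 g3] := gokP hG.
have hc X : closedb (G (msk X)) by apply/SL_closedm/g1/msk_in_SL.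
split.
  by move=> X; rewrite /fG msk_unmsk // g2 ?msk_in_SL // unmsk_msk.
move=> X Y; rewrite /fG dS_unmsk // g3 ?msk_in_SL //; exact/esym/dS_msk.
Qed.

Lemma absc_perm K K' : perm_eq K K' -> absc K =i absc K'.
Proof. by move=> p; apply: perm_mem; apply: perm_map. Qed.

Lemma app_sound (G : seq bool -> seq bool) K : gok G -> all (fun k => k < 67) K ->
  all (fun k => k < 67) (app (tab G) K) /\ absc (app (tab G) K) =i map (fG G) (absc K).
Proof.
move=> hG /allP hK; have [g1 _ _] := gokP hG.
have tE k : k < 67 -> nth 0 (tab G) k = index (G (nth [::] SL k)) SL.
  by move=> hk; rewrite /tab (nth_map [::]) // SL_size.
have inS k : k < 67 -> G (nth [::] SL k) \in SL by move=> hk; apply/g1/mem_nth; rewrite SL_size.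
split.
  rewrite /app all_sort; apply/allP => x /mapP [k /hK hk ->].
  by rewrite tE // -SL_size index_mem inS.
move=> x; rewrite /app (absc_perm (introT permPl (perm_sort leq _))) /absc -!map_comp.
congr (x \in _); apply/eq_in_map => k /hK hk /=.
by rewrite tE // nth_index ?inS // /fG msk_unmsk // SL_closed.
Qed.

Lemma mem_dd x s : x \in dd s -> x \in s.
Proof.
elim: s => [|y s IH] //; case: s IH => [|z s] IH //=.
case: ifP => _; first by move=> /IH h; rewrite in_cons h orbT.
by rewrite in_cons => /orP [/eqP ->|/IH h]; rewrite ?mem_head // in_cons h orbT.
Qed.

Lemma mem_sdiff x s o : x \in sdiff s o -> x \in s.
Proof.
elim: s o => [|y s IH] o //=; case: ifP => _; first by move=> /IH h; rewrite in_cons h orbT.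
by rewrite in_cons => /orP [/eqP ->|/IH h]; rewrite ?mem_head // in_cons h orbT.
Qed.

Lemma tab_gens t : t \in map tab gens -> exists2 G, gok G & t = tab G.
Proof.
have := c_gens; elim: gens => [|G l IH] //=; case: ifP => // hG /IH H.
by rewrite inE => /orP [/eqP ->|/H //]; exists G.
Qed.

Lemma orb_sound K0 K : all (fun k => k < 67) K0 -> K \in orb (map tab gens) K0 ->
  all (fun k => k < 67) K /\ code_iso (absc K) (absc K0).
Proof.
move=> h0; pose good K := all (fun k => k < 67) K /\ code_iso (absc K) (absc K0).
suff : forall n, let OF := iter n (step (map tab gens)) ([:: K0], [:: K0]) in
  (forall K1, K1 \in OF.1 -> good K1) /\ (forall K1, K1 \in OF.2 -> good K1).
  by move=> /(_ 8) [H _]; apply: H.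
have g0 : good K0 by split => //; apply: iso_refl.
elim => [|n IH] /=; first by split => K1; rewrite inE => /eqP ->.
move: IH; case: (iter n _ _) => O F /= [HO HF].
have HF' : forall K1, K1 \in sdiff (dd (sort lexle (flatten [seq map (app t) F | t <- map tab gens]))) O -> good K1.
  move=> K1 /mem_sdiff /mem_dd; rewrite mem_sort => /flatten_mapP [t /tab_gens [G hG ->]] /mapP [K2 /HF [h2 i2] ->].
  have [a1 a2] := app_sound hG h2; split => //.
  apply: iso_eqi_l a2 _; apply: (iso_trans _ i2); case: (fG_props hG) => f1 f2; exact: iso_invol.
split => //= K1; rewrite mem_merge mem_cat => /orP [/HO|/HF'] //.
Qed.

Lemma okp_mk a b : a < 67 -> b < 67 -> okp mkok a b = (3 <= dSc (nth [::] SL a) (nth [::] SL b)).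
Proof. by move=> ha hb; rewrite /okp /mkok (nth_map [::]) ?SL_size // (nth_map [::]) ?SL_size. Qed.

Lemma cliquesP ok n K : size K = n -> all (fun k => k < 67) K ->
  pairwise (fun a b => (a < b) && okp ok a b) K -> K \in cliques ok n.
Proof.
elim: n K => [|n IH] K.
  by move/size0nil => ->.
case/lastP: K => [//|K x]; rewrite size_rcons => -[hs].
rewrite all_rcons => /andP [hx hK]; rewrite pairwise_rcons => /andP [hR hP].
rewrite /cliques iterS -/(cliques ok n); apply/flatten_mapP; exists K; first exact: IH.
apply: map_f; rewrite mem_filter; apply/andP; split.
  rewrite allbE; apply/allP => k hk; by have /andP [] := allP hR k hk.
rewrite mem_iota; have hn : nxt K <= x.
  rewrite /nxt; case: K hR {hs hK hP IH} => [//|y K] hR.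
  by have /andP [] := allP hR _ (mem_last y K).
by rewrite hn subnKC // ltnW // (leq_ltn_trans hn).
Qed.

Lemma pairwise_impl (r r' : rel nat) s : pairwise r s ->
  (forall a b, a \in s -> b \in s -> r a b -> r' a b) -> pairwise r' s.
Proof.
elim: s => [|x s IH] //; rewrite !pairwise_cons => /andP [ha hp] H; apply/andP; split.
  apply/allP => y hy; apply: H; rewrite ?mem_head ?in_cons ?hy ?orbT //; exact: (allP ha).
apply: IH => // a b sa sb; apply: H; by rewrite in_cons ?sa ?sb orbT.
Qed.

Definition Rk a b := (a < b) && okp mkok a b.

Lemma okp_gen a b s t : a < 67 -> b < 67 -> nth [::] SL a = s -> nth [::] SL b = t ->
  okp mkok a b = (3 <= dSc s t).
Proof. by move=> ha hb <- <-; exact: okp_mk. Qed.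

Lemma okp_idx X Y : okp mkok (idx X) (idx Y) = (3 <= dS X Y).
Proof. rewrite dS_msk; exact: okp_gen (idx_lt X) (idx_lt Y) (nth_idx X) (nth_idx Y). Qed.

Lemma code_K C : is_code 3 C ->
  [/\ size (sort leq (map idx C)) = size C, all (fun k => k < 67) (sort leq (map idx C)),
      pairwise Rk (sort leq (map idx C)) & C =i absc (sort leq (map idx C))].
Proof.
move=> [uC dC]. set K := sort leq _.
have iinj : {in C &, injective idx}.
  by move=> X Y _ _ e; apply: msk_inj; rewrite -!nth_idx e.
have uK : uniq K by rewrite sort_uniq map_inj_in_uniq.
split.
- by rewrite size_sort size_map.
- by rewrite all_sort; apply/allP => k /mapP [X _ ->]; exact: idx_lt.
- have : sorted ltn K by rewrite ltn_sorted_uniq_leq uK sort_sorted //; exact: leq_total.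
  rewrite (sorted_pairwise ltn_trans) => hp.
  apply: (pairwise_impl hp) => a b.
  rewrite !mem_sort => /mapP [X hX ->] /mapP [Y hY ->] hab. rewrite /Rk hab okp_idx /=. apply: dC; [exact: hX | exact: hY | apply/eqP => e; move: hab; by rewrite e ltnn].
- move=> x; rewrite (absc_perm (introT permPl (perm_sort leq _))) /absc -map_comp.
  rewrite (@eq_map _ _ _ id) ?map_id // => X /=; by rewrite nth_idx unmsk_msk.
Qed.

Lemma bound C : is_code 3 C -> size C <= 5.
Proof.
move=> hC; have [hs ha hp _] := code_K hC; set K := sort leq _ in hs ha hp.
rewrite leqNgt; apply/negP => h6.
have : take 6 K \in cliques mkok 6.
  apply: cliquesP.
  - by rewrite size_takel // hs.
  - by apply/allP => k /mem_take; apply: (allP ha).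
  - by move: hp; rewrite -{1}(cat_take_drop 6 K) pairwise_cat => /and3P [].
by rewrite c_cl6.
Qed.

Lemma mem_cat3 (x : seq nat) (A B D : seq (seq nat)) :
  x \in A ++ B ++ D -> [\/ x \in A, x \in B | x \in D].
Proof. by rewrite !mem_cat => /or3P. Qed.

Lemma mem_sort_i (x : seq nat) r (s : seq (seq nat)) : x \in sort r s -> x \in s.
Proof. by rewrite mem_sort. Qed.

Lemma classify C : is_code 3 C -> size C = 5 ->
  [\/ code_iso C (absc Sa), code_iso C (absc Sb) | code_iso C (absc Sc)].
Proof.
move=> hC h5; have [hs ha hp hE] := code_K hC; set K := sort leq _ in hs ha hp hE.
have hK : K \in cliques mkok 5 by apply: cliquesP; rewrite ?hs.
move: hK. rewrite c_cl5. move=> /mem_dd. move=> /mem_sort_i /mem_cat3 [] h.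
- by apply: Or31; have [_ hi] := orb_sound (K0 := Sa) isT h; apply: iso_eqi_l hE hi.
- by apply: Or32; have [_ hi] := orb_sound (K0 := Sb) isT h; apply: iso_eqi_l hE hi.
- by apply: Or33; have [_ hi] := orb_sound (K0 := Sc) isT h; apply: iso_eqi_l hE hi.
Qed.

Lemma dS_sym X Y : dS X Y = dS Y X.
Proof. by rewrite /dS addvC capvC. Qed.

Lemma dS_refl X : dS X X = 0.
Proof. by rewrite /dS addvv capvv subnn. Qed.

Lemma dS_dims (X Y : subsp) a b c : \dim X = a -> \dim Y = b -> \dim (X :&: Y)%VS = c ->
  dS X Y = a + b - c - c.
Proof. by move=> ha hb hc; rewrite dS_formula ha hb hc. Qed.

Lemma cap0_sub (P X Y : subsp) : (P <= X)%VS -> (X :&: Y = 0)%VS -> \dim (P :&: Y)%VS = 0.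
Proof.
move=> hP h0; have := capvS hP (subvv Y); rewrite h0 => /dimvS; rewrite dimv0 leqn0 => /eqP //.
Qed.

Lemma dim_EL (E L M : subsp) : \dim E = 3 -> \dim L = 2 -> \dim M = 2 -> (M <= E)%VS ->
  (L :&: M = 0)%VS -> \dim (E :&: L)%VS = 1.
Proof.
move=> dE dL dM sM h0.
have h1 := dimv_sum_cap E L; have h2 := dim_le4 (E + L)%VS.
have h3 : \dim (E :&: L)%VS <= 2 by rewrite -[X in _ <= X]/(2) -[X in _ <= X]dL; apply: dimvS; exact: capvSr.
have h4 : \dim (E :&: L)%VS != 2.
  apply/negP => /eqP c2.
  have eL : (E :&: L)%VS = L.
    by apply/eqP; rewrite eqEdim capvSr c2 dL leqnn.
  have sL : (L <= E)%VS by rewrite -eL capvSl.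
  have : (L + M <= E)%VS by rewrite subv_add sL sM.
  move/dimvS; have := dimv_sum_cap L M; rewrite h0 dimv0 dL dM dE addn0 => ->.
  by [].
move: h1 h2 h3 h4; rewrite dE dL; lia.
Qed.

Lemma dim_PE (P E : subsp) : \dim P = 1 -> ~~ (P <= E)%VS -> \dim (P :&: E)%VS = 0.
Proof.
move=> dP nE; have h3 : \dim (P :&: E)%VS <= 1 by rewrite -[X in _ <= X]dP; apply: dimvS; exact: capvSl.
case: (ltngtP (\dim (P :&: E)%VS) 1) h3 => // [|c1 _]; first by case: (\dim _).
have eP : (P :&: E)%VS = P by apply/eqP; rewrite eqEdim capvSl c1 dP leqnn.
by move: nE; rewrite -eP capvSr.
Qed.

Lemma in5 (a b c d e Z : subsp) : Z \in [:: a; b; c; d; e] ->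
  Z = a \/ Z = b \/ Z = c \/ Z = d \/ Z = e.
Proof.
rewrite !inE => /orP [/eqP->|/orP [/eqP->|/orP [/eqP->|/orP [/eqP->|/eqP->]]]];
  by [left|right;left|right;right;left|right;right;right;left|right;right;right;right].
Qed.

Lemma is_code5 (a b c d e : subsp) :
  3 <= dS a b -> 3 <= dS a c -> 3 <= dS a d -> 3 <= dS a e -> 3 <= dS b c ->
  3 <= dS b d -> 3 <= dS b e -> 3 <= dS c d -> 3 <= dS c e -> 3 <= dS d e ->
  is_code 3 [:: a; b; c; d; e].
Proof.
move=> ab ac ad ae bc bd be cd ce de.
have ne X Y : 3 <= dS X Y -> X != Y.
  by move=> h; apply/eqP => e0; move: h; rewrite e0 dS_refl.
split.
  rewrite /= !inE !negb_or.
  by rewrite (ne _ _ ab) (ne _ _ ac) (ne _ _ ad) (ne _ _ ae) (ne _ _ bc) (ne _ _ bd) (ne _ _ be)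
     (ne _ _ cd) (ne _ _ ce) (ne _ _ de).
move=> X Y /in5 [->|[->|[->|[->|->]]]] /in5 [->|[->|[->|[->|->]]]]; rewrite ?eqxx // => _; by rewrite // dS_sym.
Qed.

Definition inv (C : seq subsp) := \sum_(X <- C) \sum_(Y <- C) ((dS X Y == 4) : nat).

Lemma inv_iso C D : code_iso C D -> uniq C -> uniq D -> inv C = inv D.
Proof.
move=> [f [[g fg gf] df mf]] uC uD.
have fi : injective f := can_inj fg.
have p : perm_eq D (map f C) by apply: uniq_perm => //; rewrite ?map_inj_uniq // => x; rewrite mf.
have E (h : subsp -> nat) : \sum_(Y <- D) h Y = \sum_(X <- C) h (f X).
  by rewrite (perm_big _ p) big_map.
rewrite /inv E; apply: eq_bigr => X _; rewrite E; apply: eq_bigr => Y _; by rewrite df.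
Qed.

Lemma inv5 (a b c d e : subsp) : inv [:: a; b; c; d; e] =
  \sum_(X <- [:: a; b; c; d; e]) \sum_(Y <- [:: a; b; c; d; e]) ((dS X Y == 4) : nat).
Proof. by []. Qed.

Lemma inv_absc K : all (fun k => k < 67) K ->
  inv (absc K) = sumn [seq sumn [seq ((dSc (nth [::] SL a) (nth [::] SL b) == 4) : nat) | b <- K] | a <- K].
Proof.
move=> /allP hK; rewrite /inv /absc big_map sumnE big_map; apply: eq_big_seq => a ha.
rewrite big_map sumnE big_map; apply: eq_big_seq => b hb.
by rewrite dS_unmsk ?SL_closed ?hK.
Qed.

Lemma uniq_absc K : all (fun k => k < 67) K -> uniq K -> uniq (absc K).
Proof.
move=> /allP hK uK; rewrite map_inj_in_uniq // => a b ha hb e.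
have := congr1 msk e; rewrite !msk_unmsk ?SL_closed ?hK // => /eqP.
by rewrite nth_uniq ?SL_size ?SL_uniq ?hK // => /eqP.
Qed.

Lemma inv_Sa : inv (absc Sa) = 20.
Proof. by rewrite inv_absc //; vm_compute. Qed.
Lemma inv_Sb : inv (absc Sb) = 12.
Proof. by rewrite inv_absc //; vm_compute. Qed.
Lemma inv_Sc : inv (absc Sc) = 8.
Proof. by rewrite inv_absc //; vm_compute. Qed.
Lemma uniq_S : [/\ uniq (absc Sa), uniq (absc Sb) & uniq (absc Sc)].
Proof. by split; apply: uniq_absc. Qed.

Section Spread.
Variables (L : 'I_5 -> subsp) (P5 P4 E : subsp).
Hypothesis hD : spread_data L P5 P4 E.

Let hL : line_spread L. Proof. by case: hD. Qed.
Let dL i : \dim (L i) = 2. Proof. by case: hL. Qed.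
Let cL i j : i != j -> (L i :&: L j = 0)%VS. Proof. by case: hL => _; apply. Qed.
Let dP5 : \dim P5 = 1. Proof. by case: hD => _ []. Qed.
Let sP5 : (P5 <= L i4)%VS. Proof. by case: hD => _ []. Qed.
Let dP4 : \dim P4 = 1. Proof. by case: hD => _ _ []. Qed.
Let sP4 : (P4 <= L i3)%VS. Proof. by case: hD => _ _ []. Qed.
Let dE : \dim E = 3. Proof. by case: hD => _ _ _ []. Qed.
Let sE : (L i4 <= E)%VS. Proof. by case: hD => _ _ _ []. Qed.
Let nE : ~~ (P4 <= E)%VS. Proof. by case: hD => _ _ _ []. Qed.

Lemma dLL i j : i != j -> dS (L i) (L j) = 4.
Proof. by move=> h; rewrite (@dS_dims _ _ 2 2 0 (dL i) (dL j)) // (cL h) dimv0. Qed.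
Lemma dP5L i : i != i4 -> dS P5 (L i) = 3.
Proof. by move=> h; rewrite (@dS_dims _ _ 1 2 0 dP5 (dL i)) //; apply: (cap0_sub sP5); apply: cL; rewrite eq_sym. Qed.
Lemma dP4L i : i != i3 -> dS P4 (L i) = 3.
Proof. by move=> h; rewrite (@dS_dims _ _ 1 2 0 dP4 (dL i)) //; apply: (cap0_sub sP4); apply: cL; rewrite eq_sym. Qed.
Lemma dEL i : i != i4 -> dS E (L i) = 3.
Proof. by move=> h; rewrite (@dS_dims _ _ 3 2 1 dE (dL i)) //; apply: (dim_EL dE (dL i) (dL i4) sE); apply: cL. Qed.
Lemma dP4E : dS P4 E = 4.
Proof. by rewrite (@dS_dims _ _ 1 3 0 dP4 dE) //; apply: dim_PE. Qed.

Lemma codes_ok : [/\ is_code 3 (code_a L), is_code 3 (code_b L P5), is_code 3 (code_c L P4 E) &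
   [/\ inv (code_a L) = 20, inv (code_b L P5) = 12 & inv (code_c L P4 E) = 8]].
Proof.
have l01 := @dLL i0 i1 isT; have l02 := @dLL i0 i2 isT; have l03 := @dLL i0 i3 isT.
have l04 := @dLL i0 i4 isT; have l12 := @dLL i1 i2 isT; have l13 := @dLL i1 i3 isT.
have l14 := @dLL i1 i4 isT; have l23 := @dLL i2 i3 isT; have l24 := @dLL i2 i4 isT.
have l34 := @dLL i3 i4 isT.
have p0 := @dP5L i0 isT; have p1 := @dP5L i1 isT; have p2 := @dP5L i2 isT; have p3 := @dP5L i3 isT.
have q0 := @dP4L i0 isT; have q1 := @dP4L i1 isT; have q2 := @dP4L i2 isT.
have e0 := @dEL i0 isT; have e1 := @dEL i1 isT; have e2 := @dEL i2 isT.
have pe := dP4E.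
have S X Y n : dS X Y = n -> dS Y X = n by move=> h; rewrite dS_sym.
have r01 := S _ _ _ l01; have r02 := S _ _ _ l02; have r03 := S _ _ _ l03; have r04 := S _ _ _ l04.
have r12 := S _ _ _ l12; have r13 := S _ _ _ l13; have r14 := S _ _ _ l14; have r23 := S _ _ _ l23.
have r24 := S _ _ _ l24; have r34 := S _ _ _ l34.
have s0 := S _ _ _ p0; have s1 := S _ _ _ p1; have s2 := S _ _ _ p2; have s3 := S _ _ _ p3.
have t0 := S _ _ _ q0; have t1 := S _ _ _ q1; have t2 := S _ _ _ q2.
have f0 := S _ _ _ e0; have f1 := S _ _ _ e1; have f2 := S _ _ _ e2; have ep := S _ _ _ pe.
split.
- by apply: is_code5; rewrite ?l01 ?l02 ?l03 ?l04 ?l12 ?l13 ?l14 ?l23 ?l24 ?l34.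
- by apply: is_code5; rewrite ?l01 ?l02 ?l03 ?l12 ?l13 ?l23 ?s0 ?s1 ?s2 ?s3.
- by apply: is_code5; rewrite ?l01 ?l02 ?l12 ?t0 ?t1 ?t2 ?f0 ?f1 ?f2 ?pe.
split.
- rewrite /code_a inv5 !big_cons !big_nil !dS_refl.
  by rewrite l01 l02 l03 l04 l12 l13 l14 l23 l24 l34 r01 r02 r03 r04 r12 r13 r14 r23 r24 r34.
- rewrite /code_b inv5 !big_cons !big_nil !dS_refl.
  by rewrite l01 l02 l03 l12 l13 l23 r01 r02 r03 r12 r13 r23 p0 p1 p2 p3 s0 s1 s2 s3.
- rewrite /code_c inv5 !big_cons !big_nil !dS_refl.
  by rewrite l01 l02 l12 r01 r02 r12 q0 q1 q2 t0 t1 t2 e0 e1 e2 f0 f1 f2 pe ep.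
Qed.

End Spread.

Definition Lc (i : 'I_5) : subsp := unmsk (nth [::] SL (nth 0 Sa i)).
Definition P5c : subsp := unmsk (nth [::] SL 29).
Definition P4c : subsp := unmsk (nth [::] SL 2).
Definition Ec : subsp := unmsk (nth [::] SL 64).

Lemma spread_exists : spread_data Lc P5c P4c Ec.
Proof.
have dimk k n : k < 67 -> dimc (nth [::] SL k) = n -> \dim (unmsk (nth [::] SL k)) = n.
  by move=> hk <-; rewrite dim_unmsk // SL_closed.
have subk k l : k < 67 -> l < 67 -> (unmsk (nth [::] SL k) <= unmsk (nth [::] SL l))%VS =
   subc (nth [::] SL k) (nth [::] SL l).
  by move=> hk hl; rewrite sub_unmsk ?SL_closed.
have hS i : nth 0 Sa i < 67.
  by case: i => [|[|[|[|[|i]]]]] //; rewrite nth_default.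
split.
- split.
    by move=> i; apply: dimk (hS i) _; case: i => [[|[|[|[|[|i]]]]] hi] //; vm_compute.
  move=> i j hij; apply/eqP; rewrite -dimv_eq0 dim_msk msk_cap !msk_unmsk ?SL_closed ?hS //.
  have H : allb (fun i => allb (fun j => (i == j) || (dimc (capc (nth [::] SL (nth 0 Sa i)) (nth [::] SL (nth 0 Sa j))) == 0)) (iota 0 5)) (iota 0 5).
    by vm_compute.
  move: hij; rewrite -(inj_eq val_inj) => /negbTE hij'.
  by have := allb_iota (allb_iota H (ltn_ord i)) (ltn_ord j); rewrite /= hij'.
- split; first by apply: dimk => //; vm_compute.
  by rewrite /Lc subk //; vm_compute.
- split; first by apply: dimk => //; vm_compute.
  by rewrite /Lc subk //; vm_compute.
- split; first by apply: dimk => //; vm_compute.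
  + by rewrite /Lc subk //; vm_compute.
  + by rewrite /P4c /Ec subk //; vm_compute.
Qed.

Lemma inv_neq C D m n : inv C = m -> inv D = n -> m != n -> inv C = inv D -> False.
Proof. by move=> -> -> /eqP. Qed.

Theorem mainTheorem18 :
  (* A_2(4,3) = 5 *)
  ((forall C : seq subsp, is_code 3 C -> (size C <= 5)%N) /\
   (exists C : seq subsp, is_code 3 C /\ size C = 5%N)) /\
  (* the spread data exist *)
  (exists (L : 'I_5 -> subsp) (P5 P4 E : subsp), spread_data L P5 P4 E) /\
  (* for any spread data, (a), (b), (c) represent exactly the 3 isomorphism classes *)
  (forall (L : 'I_5 -> subsp) (P5 P4 E : subsp), spread_data L P5 P4 E ->
     let Ca := code_a L in let Cb := code_b L P5 in let Cc := code_c L P4 E in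
     [/\ is_code 3 Ca /\ size Ca = 5%N,
         is_code 3 Cb /\ size Cb = 5%N,
         is_code 3 Cc /\ size Cc = 5%N,
         [/\ ~ code_iso Ca Cb, ~ code_iso Ca Cc & ~ code_iso Cb Cc] &
         forall C : seq subsp, is_code 3 C -> size C = 5%N ->
           code_iso C Ca \/ code_iso C Cb \/ code_iso C Cc]).
Proof.
split; first split.
- exact: bound.
- exists (code_a Lc); have [h _ _ _] := codes_ok spread_exists; by split.
split; first by exists Lc, P5c, P4c, Ec; exact: spread_exists.
move=> L P5 P4 E hD; cbv zeta.
have [ha hb hc [ia ib ic]] := codes_ok hD.
have [ua ub uc] := uniq_S.
have isoA : code_iso (code_a L) (absc Sa).
  case: (classify ha erefl) => h; first exact: h.
    exfalso; exact: (inv_neq ia inv_Sb isT (inv_iso h (proj1 ha) ub)).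
  exfalso; exact: (inv_neq ia inv_Sc isT (inv_iso h (proj1 ha) uc)).
have isoB : code_iso (code_b L P5) (absc Sb).
  case: (classify hb erefl) => h.
  - exfalso; exact: (inv_neq ib inv_Sa isT (inv_iso h (proj1 hb) ua)).
  - exact: h.
  - exfalso; exact: (inv_neq ib inv_Sc isT (inv_iso h (proj1 hb) uc)).
have isoC : code_iso (code_c L P4 E) (absc Sc).
  case: (classify hc erefl) => h.
  - exfalso; exact: (inv_neq ic inv_Sa isT (inv_iso h (proj1 hc) ua)).
  - exfalso; exact: (inv_neq ic inv_Sb isT (inv_iso h (proj1 hc) ub)).
  - exact: h.
split.
- split; [exact: ha | by []].
- split; [exact: hb | by []].
- split; [exact: hc | by []].
- split => h.
  + exact: (inv_neq ia ib isT (inv_iso h (proj1 ha) (proj1 hb))).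
  + exact: (inv_neq ia ic isT (inv_iso h (proj1 ha) (proj1 hc))).
  + exact: (inv_neq ib ic isT (inv_iso h (proj1 hb) (proj1 hc))).
- move=> C hC h5; case: (classify hC h5) => h.
  + left; exact: (iso_trans h (iso_sym isoA)).
  + right; left; exact: (iso_trans h (iso_sym isoB)).
  + right; right; exact: (iso_trans h (iso_sym isoC)).
Qed.
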